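(* If $x\ge1$ and $y\ge1$, then $\Gamma(x,y)\ge B(x,y)$. If $0<x\le1$ and $0<y\le1$, then $\Gamma(x,y)\le B(x,y)$.
   Context: For $x>0,y>0$ the Bigamma function is the (convergent) improper integral $\Gamma(x,y):=\int_0^1(-\ln t)^{x-1}\big(-\ln(1-t)\big)^{y-1}\,dt$. $B(x,y)=\int_0^1t^{x-1}(1-t)^{y-1}\,dt$ is the Euler Beta function. *)

(* Defs.v *)
From mathcomp Require Import all_boot all_order all_algebra.
From mathcomp Require Import all_classical all_reals all_analysis.
Set Implicit Arguments. Unset Strict Implicit. Unset Printing Implicit Defensive.
Import Order.TTheory GRing.Theory Num.Theory.
Local Open Scope classical_set_scope.
Local Open Scope ring_scope.

Definition Bigamma (R : realType) (x y : R) : \bar R :=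
  (\int[@lebesgue_measure R]_(t in `]0%R, 1%R[)
     ((- ln t) `^ (x - 1) * (- ln (1 - t)) `^ (y - 1))%:E)%E.

Definition EulerBeta (R : realType) (x y : R) : \bar R :=
  (\int[@lebesgue_measure R]_(t in `]0%R, 1%R[)
     (t `^ (x - 1) * (1 - t) `^ (y - 1))%:E)%E.

(* Main.v *)
Require Import Defs.
From mathcomp Require Import all_boot all_order all_algebra.
From mathcomp Require Import all_classical all_reals all_analysis.
From mathcomp Require Import lra.
From mathcomp Require Import measurable_realfun.
Import Order.TTheory GRing.Theory Num.Theory.
Import numFieldNormedType.Exports.
Local Open Scope classical_set_scope.
Local Open Scope ring_scope.

Section S.
Context {R : realType}.
Local Notation mu := (@lebesgue_measure R).

Lemma powR_anti r (a b : R) : r <= 0 -> 0 < a -> a <= b -> b `^ r <= a `^ r.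
Proof.
move=> r0 a0 ab.
have b0 : 0 < b by apply: lt_le_trans ab.
have [s hs] : exists s, r = - s by exists (- r); rewrite opprK.
subst r.
have s0 : 0 <= s by rewrite -oppr_le0.
have hb : 0 < b `^ s by apply: powR_gt0.
have ha : 0 < a `^ s by apply: powR_gt0.
have hab : a `^ s <= b `^ s.
  by apply: (ge0_ler_powR s0 _ _ ab); rewrite nnegrE ltW.
rewrite !powRN lef_pV2 ?posrE //.
Qed.

Lemma onem_preimage (a b : R) :
  (fun t : R => 1 - t) @^-1` `]a, b]%classic = `[1 - b, 1 - a[%classic.
Proof.
apply/seteqP; split => t /=; rewrite !in_itv /= => /andP[h1 h2];
  apply/andP; split; lra.
Qed.

Lemma meas_onem : measurable_fun [set: measurableTypeR R] ((fun t : R => 1 - t) : measurableTypeR R -> measurableTypeR R).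
Proof. by apply: measurable_realfun.measurable_funB => //; exact: measurable_cst. Qed.

Lemma lebesgue_measure_onem (A : set R) : measurable A ->
  pushforward mu ((fun t => 1 - t) : R -> measurableTypeR R) A = mu A.
Proof.
move=> mA; apply/esym/lebesgue_measure_unique => //=; first exact: meas_onem.
move=> _ _ [[a b]] _ <-.
rewrite /pushforward /= onem_preimage !lebesgue_measure_itv/=.
rewrite !lte_fin; congr (if _ then _ else _); first by apply/idP/idP; lra.
by rewrite -EFinB; congr EFin; lra.
Qed.



Lemma refl_int (f : R -> R) : measurable_fun [set: R] f ->
  (forall r, 0 <= f r) ->
  (\int[mu]_(t in `]0%R, 1%R[) (f t)%:E =
   \int[mu]_(t in `]0%R, 1%R[) (f (1 - t))%:E)%E.
Proof.
move=> mf f0.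
have E : `]0%R, 1%R[%classic = (fun t : R => 1 - t) @^-1` `]0%R, 1%R[.
  apply/seteqP; split => t /=; rewrite !in_itv /= => /andP[h1 h2];
    apply/andP; split; lra.
transitivity (\int[mu]_(t in (fun t : R => 1 - t)%R @^-1` `]0%R, 1%R[)
   ((fun u => (f u)%:E) \o (fun t : R => 1 - t)%R) t)%E; last by rewrite -E.
rewrite -(ge0_integral_pushforward meas_onem) //=.
- apply: eq_measure_integral => //=; first by move=> A mA; apply: meas_onem.
  move=> A mA AS; rewrite -lebesgue_measure_onem //.
- by apply/measurable_realfun.measurable_EFinP; exact: measurable_funTS.
- by move=> y _; rewrite lee_fin.
Qed.

Lemma mT_ln_pow p (h : R -> R) : measurable_fun [set: R] h ->
  measurable_fun [set: R] (fun t => (- ln (h t)) `^ p).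
Proof.
move=> mh; apply: (measurableT_comp (measurable_powR p)).
apply: (measurableT_comp (measurable_realfun.measurable_funN _)) => //.

Qed.

Lemma mT_g p q : measurable_fun [set: R]
  (fun t : R => (- ln t) `^ p * (- ln (1 - t)) `^ q).
Proof.
apply: measurable_realfun.measurable_funM; apply: mT_ln_pow => //.
by apply: measurable_realfun.measurable_funB => //; exact: measurable_cst.
Qed.

Lemma mT_b p q : measurable_fun [set: R]
  (fun t : R => t `^ p * (1 - t) `^ q).
Proof.
apply: measurable_realfun.measurable_funM.
  exact: measurable_powR.
apply: (measurableT_comp (measurable_powR q)).
by apply: measurable_realfun.measurable_funB => //; exact: measurable_cst.
Qed.

Lemma ln_bound1 (t : R) : 0 < t < 1 -> 1 - t <= - ln t.
Proof.
move=> /andP[t0 t1]; have := @le_ln1Dx R (t - 1).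
rewrite [1 + _]addrC subrK => h; rewrite lerNr opprB; apply: h; lra.
Qed.

Lemma ln_bound2 (t : R) : 0 < t < 1 -> t <= - ln (1 - t).
Proof.
move=> /andP[t0 t1]; have := @le_ln1Dx R (- t).
rewrite -/(1 - t) => h; rewrite lerNr; apply: h; lra.
Qed.
End S.

Theorem mainTheorem9 (R : realType) :
  (forall x y : R, 1 <= x -> 1 <= y -> (EulerBeta x y <= Bigamma x y)%E) /\
  (forall x y : R, 0 < x -> x <= 1 -> 0 < y -> y <= 1 ->
     (Bigamma x y <= EulerBeta x y)%E).
Proof.
have mgr (p q : R) : measurable_fun [set: R]
    (fun t : R => (- ln (1 - t)) `^ p * (- ln (1 - (1 - t))) `^ q).
  apply: (measurableT_comp (mT_g p q)).
  by apply: measurable_realfun.measurable_funB => //; exact: measurable_cst.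
have g0 (p q : R) (r : R) : 0 <= (- ln r) `^ p * (- ln (1 - r)) `^ q.
  by apply: mulr_ge0; apply: powR_ge0.
split.
- move=> x y x1 y1; rewrite /Bigamma /EulerBeta.
  rewrite (@refl_int R _ (mT_g (x - 1) (y - 1))) //.
  apply: ge0_le_integral => //=.
  + by move=> t _; rewrite lee_fin mulr_ge0 ?powR_ge0.
  + by apply/measurable_EFinP; apply: measurable_funTS; exact: mT_b.
  + by apply/measurable_EFinP; apply: measurable_funTS; exact: mgr.
  + move=> t; rewrite /= in_itv /= => ht.
    have -> : 1 - (1 - t) = t by lra.
    rewrite lee_fin; have H1 := @ln_bound1 R t ht; have H2 := @ln_bound2 R t ht.
    move/andP: ht => [t0 t1].
    apply: ler_pM; rewrite ?powR_ge0 //.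
    * by apply: (ge0_ler_powR _ _ _ H2); rewrite ?nnegrE; lra.
    * by apply: (ge0_ler_powR _ _ _ H1); rewrite ?nnegrE; lra.
- move=> x y x0 x1 y0 y1; rewrite /Bigamma /EulerBeta.
  rewrite (@refl_int R _ (mT_g (x - 1) (y - 1))) //.
  apply: ge0_le_integral => //=.
  + by move=> t _; rewrite lee_fin mulr_ge0 ?powR_ge0.
  + by apply/measurable_EFinP; apply: measurable_funTS; exact: mgr.
  + by apply/measurable_EFinP; apply: measurable_funTS; exact: mT_b.
  + move=> t; rewrite /= in_itv /= => ht.
    have -> : 1 - (1 - t) = t by lra.
    rewrite lee_fin; have H1 := @ln_bound1 R t ht; have H2 := @ln_bound2 R t ht.
    move/andP: ht => [t0 t1].
    apply: ler_pM; rewrite ?powR_ge0 //.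
    * by apply: powR_anti => //; lra.
    * by apply: powR_anti => //; lra.
Qed.
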